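(* Let $(F_S,\iota)$ be an embedded local étale algebra and let $\Gamma,\Gamma'\subseteq\mathrm{PGL}_2(F_S)$ be commensurable subgroups. Then $\mathcal L^S_{\Gamma'}=\mathcal L^S_\Gamma$.
   Context: Fix a prime $p$ and let $\mathbf{C}$ be the completion of an algebraic closure of $\mathbb{Q}_p$ or of $\mathbb{F}_p((T))$. An embedded local étale algebra $(F_S,\iota)$ consists of a finite non-empty set $S$, non-Archimedean local fields $F_\mathfrak p$ ($\mathfrak p\in S$) of residue characteristic $p$ and the same characteristic as $\mathbf C$, and embeddings $\iota_\mathfrak p\colon F_\mathfrak p\hookrightarrow\mathbf C$. $\mathrm{PGL}_2(F_S)=\prod_\mathfrak p\mathrm{PGL}_2(F_\mathfrak p)$ acts componentwise via $\iota$ by Möbius transformations on $\mathbb P^1(\mathbf C_S)=\prod_{\mathfrak p\in S}\mathbb P^1(\mathbf C)$. For a subgroup $\Gamma$, $\mathcal L^S_\Gamma$ is the set of $x\in\mathbb P^1(\mathbf C_S)$ such that $\gamma_j(y)\to x$ for some $y\in\mathbb P^1(\mathbf C_S)$ and pairwise distinct $\gamma_j\in\Gamma$. *)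

(* Defs.v *)
From HB Require Import structures.
From mathcomp Require Import all_boot all_order all_algebra.
From mathcomp Require Import reals.
Set Implicit Arguments. Unset Strict Implicit. Unset Printing Implicit Defensive.
Import Order.TTheory GRing.Theory Num.Theory.
Local Open Scope ring_scope.

Section Valued.
Variable R : realType.

Definition na_abs (K : fieldType) (v : K -> R) : Prop :=
  [/\ (forall x, 0 <= v x), (forall x, v x = 0 <-> x = 0),
      (forall x y, v (x * y) = v x * v y) &
      (forall x y, v (x + y) <= Num.max (v x) (v y))].

Definition cvg_v (K : fieldType) (v : K -> R) (u : nat -> K) (l : K) : Prop :=
  forall e : R, 0 < e -> exists N : nat, forall n, (N <= n)%N -> v (u n - l) < e.

Definition cauchy_v (K : fieldType) (v : K -> R) (u : nat -> K) : Prop :=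
  forall e : R, 0 < e -> exists N : nat,
    forall m n, (N <= m)%N -> (N <= n)%N -> v (u m - u n) < e.

Definition complete_v (K : fieldType) (v : K -> R) : Prop :=
  forall u, cauchy_v v u -> exists l, cvg_v v u l.

Definition closure_v (K : fieldType) (v : K -> R) (A : K -> Prop) (x : K) : Prop :=
  forall e : R, 0 < e -> exists a, A a /\ v (x - a) < e.

Definition dense_v (K : fieldType) (v : K -> R) (A : K -> Prop) : Prop :=
  forall x, closure_v v A x.

Definition algebraic_over (K : fieldType) (A : K -> Prop) (x : K) : Prop :=
  exists P : {poly K}, [/\ P != 0, (forall i, A P`_i) & root P x].

(** Non-Archimedean local field of residue characteristic p:
    complete, discretely and nontrivially valued, finite residue field,
    residue characteristic p. *)
Definition na_local_field (p : nat) (K : fieldType) (v : K -> R) : Prop :=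
  [/\ na_abs v, complete_v v,
      (exists pi : K, 0 < v pi < 1 /\
         forall x, x != 0 -> exists z : int, v x = v pi ^ z),
      (exists reps : seq K, forall x, v x <= 1 ->
         exists2 r, r \in reps & v (x - r) < 1) &
      v p%:R < 1].

(** C is (isometric to) the completion of an algebraic closure of Q_p or of
    F_p((T)): C is complete, algebraically closed (its type is a
    closedFieldType), and the elements algebraic over a closed subfield B are
    dense, where B is either the closure of the prime field Q (char 0, with
    |p| < 1, so B = Q_p by Ostrowski) or the closure of F_p(T) for some
    0 < |T| < 1 (char p, so B = F_p((T))). *)
Definition completed_alg_closure (p : nat) (C : closedFieldType) (v : C -> R)
  : Prop :=
  [/\ prime p, na_abs v, complete_v v, v p%:R < 1 &
   exists B : C -> Prop,
     ( ((forall q : nat, q \notin [pchar C]) /\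
        B = closure_v v (fun x => exists r : rat, x = ratr r))
     \/ (p \in [pchar C] /\ exists T : C, 0 < v T < 1 /\
          B = closure_v v (fun x => exists P Q : {poly C},
                [/\ (forall i, exists n : nat, P`_i = n%:R),
                    (forall i, exists n : nat, Q`_i = n%:R),
                    Q.[T] != 0 & x = P.[T] / Q.[T]])) )
     /\ dense_v v (algebraic_over B)].

Definition cont_emb (K L : fieldType) (vK : K -> R) (vL : L -> R) (f : K -> L)
  : Prop := forall u l, cvg_v vK u l -> cvg_v vL (fun n => f (u n)) (f l).

(** Points of P^1(C): None is the point at infinity.
    Chordal (spherical) metric of the non-Archimedean absolute value. *)
Definition chord (C : fieldType) (v : C -> R) (x y : option C) : R :=
  match x, y with
  | Some a, Some b => v (a - b) / (Num.max 1 (v a) * Num.max 1 (v b))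
  | Some a, None => 1 / Num.max 1 (v a)
  | None, Some b => 1 / Num.max 1 (v b)
  | None, None => 0
  end.

Definition mobius (C : fieldType) (a b c d : C) (z : option C) : option C :=
  match z with
  | None => if c == 0 then None else Some (a / c)
  | Some z => if c * z + d == 0 then None else Some ((a * z + b) / (c * z + d))
  end.

End Valued.

Section PGL.
Variables (S : finType) (F : S -> fieldType).

(** Elements of GL_2(F_S) (as families of matrices); an element of
    PGL_2(F_S) is represented by any of its lifts. *)
Definition GL2S := forall s : S, 'M[F s]_2.

Definition mulS (g h : GL2S) : GL2S := fun s => g s *m h s.
Definition invS (g : GL2S) : GL2S := fun s => invmx (g s).

Definition projeq (g h : GL2S) : Prop :=
  forall s, exists c : F s, c != 0 /\ g s = c *: h s.

(** A subgroup of PGL_2(F_S), represented by its full preimage in GL_2(F_S):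
    a subgroup of GL_2(F_S) containing the center (nonzero scalars). *)
Definition PGL2S_subgroup (G : GL2S -> Prop) : Prop :=
  [/\ (forall g, G g -> forall s, g s \in unitmx),
      (forall c : forall s, F s, (forall s, c s != 0) ->
          G (fun s => (c s)%:M)),
      (forall g h, G g -> G h -> G (mulS g h)) &
      (forall g, G g -> G (invS g))].

Definition finite_index (H G : GL2S -> Prop) : Prop :=
  exists (n : nat) (r : 'I_n -> GL2S),
    forall g, G g -> exists i : 'I_n, H (mulS (invS (r i)) g).

Definition commensurable (G G' : GL2S -> Prop) : Prop :=
  finite_index (fun g => G g /\ G' g) G /\ finite_index (fun g => G g /\ G' g) G'.

Variables (R : realType) (C : fieldType) (vC : C -> R)
  (iota : forall s, {rmorphism F s -> C}).

Definition actS (g : GL2S) (z : S -> option C) : S -> option C :=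
  fun s => mobius (iota s (g s ord0 ord0)) (iota s (g s ord0 ord_max))
                  (iota s (g s ord_max ord0)) (iota s (g s ord_max ord_max))
                  (z s).

Definition cvgP1S (u : nat -> S -> option C) (x : S -> option C) : Prop :=
  forall s, forall e : R, 0 < e -> exists N : nat,
    forall n, (N <= n)%N -> chord vC (u n s) (x s) < e.

Definition limit_set (G : GL2S -> Prop) (x : S -> option C) : Prop :=
  exists (y : S -> option C) (gam : nat -> GL2S),
    [/\ (forall j, G (gam j)),
        (forall i j, i <> j -> ~ projeq (gam i) (gam j)) &
        cvgP1S (fun j => actS (gam j) y) x].

End PGL.

(* Main.v *)
From mathcomp Require Import all_boot all_order all_algebra ring.
From mathcomp Require Import reals boolp.
Require Import Defs.
Import Order.TTheory GRing.Theory Num.Theory.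
Local Open Scope ring_scope.

Lemma l1 : lift (ord0:'I_2) (ord0 : 'I_1) = ord_max :> 'I_2. Proof. exact: val_inj. Qed.

Lemma det22 (C : comNzRingType) (B : 'M[C]_2) :
  \det B = B ord0 ord0 * B ord_max ord_max - B ord0 ord_max * B ord_max ord0.
Proof.
rewrite (expand_det_row _ ord0) !big_ord_recl big_ord0 /cofactor !det_mx11 !mxE /=.
rewrite addr0 expr0 expr1 !mul1r.
have -> : lift (ord0:'I_2) (ord0 : 'I_1) = ord_max :> 'I_2 by exact: val_inj.
have -> : lift (ord_max:'I_2) (0:'I_1) = ord0 :> 'I_2 by exact: val_inj.
by rewrite mulN1r mulrN.
Qed.

Lemma mulE (C : comNzRingType) (A B : 'M[C]_2) i j :
  (A *m B) i j = A i ord0 * B ord0 j + A i ord_max * B ord_max j.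
Proof. by rewrite !mxE !big_ord_recl big_ord0 addr0 l1. Qed.

Lemma mob_comp (C : fieldType) (a b c d a' b' c' d' : C) z : a*d - b*c != 0 ->
  mobius (a'*a+b'*c) (a'*b+b'*d) (c'*a+d'*c) (c'*b+d'*d) z
  = mobius a' b' c' d' (mobius a b c d z).
Proof.
move=> hdet; case: z => [z|] /=.
- have E : (c' * a + d' * c) * z + (c' * b + d' * d) = c' * (a*z+b) + d' * (c*z+d) by ring.
  have E2 : (a' * a + b' * c) * z + (a' * b + b' * d) = a' * (a*z+b) + b' * (c*z+d) by ring.
  rewrite E E2.
  case: (eqVneq (c*z+d) 0) => [w1|w1] /=.
  + have w0 : a*z+b != 0.
      apply: contraNneq hdet => w0.
      have -> : d = - (c*z) by rewrite -[d](addKr (c*z)) w1 addr0.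
      have -> : b = - (a*z) by rewrite -[b](addKr (a*z)) w0 addr0.
      by apply/eqP; ring.
    rewrite w1 !mulr0 !addr0 mulf_eq0 (negbTE w0) orbF.
    case: (eqVneq c' 0) => [|c'0] //=.
    by congr Some; field; rewrite c'0 w0.
  + have E3 : c' * ((a * z + b) / (c * z + d)) + d' = (c' * (a*z+b) + d' * (c*z+d)) / (c*z+d) by field.
    rewrite E3 mulf_eq0 invr_eq0 (negbTE w1) orbF.
    case: (eqVneq (c' * (a*z+b) + d' * (c*z+d)) 0) => [|h] //=.
    by congr Some; field; rewrite h w1.
- case: (eqVneq c 0) => [c0|c0] /=.
  + have a0 : a != 0 by apply: contraNneq hdet => ->; rewrite c0; apply/eqP; ring.
    rewrite c0 !mulr0 !addr0 mulf_eq0 (negbTE a0) orbF.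
    case: (eqVneq c' 0) => [|c'0] //=.
    by congr Some; field; rewrite c'0 a0.
  + have E3 : c' * (a / c) + d' = (c' * a + d' * c) / c by field.
    rewrite E3 mulf_eq0 invr_eq0 (negbTE c0) orbF.
    case: (eqVneq (c' * a + d' * c) 0) => [|h] //=.
    by congr Some; field; rewrite h c0.
Qed.

Lemma mob_mx (K : fieldType) (C : fieldType) (f : {rmorphism K -> C}) (A B : 'M[K]_2) z :
  B \in unitmx ->
  mobius (f ((A *m B) ord0 ord0)) (f ((A *m B) ord0 ord_max))
         (f ((A *m B) ord_max ord0)) (f ((A *m B) ord_max ord_max)) z
  = mobius (f (A ord0 ord0)) (f (A ord0 ord_max)) (f (A ord_max ord0)) (f (A ord_max ord_max))
      (mobius (f (B ord0 ord0)) (f (B ord0 ord_max)) (f (B ord_max ord0)) (f (B ord_max ord_max)) z).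
Proof.
move=> uB; rewrite !mulE !rmorphD !rmorphM; apply: mob_comp.
by rewrite -!rmorphM -rmorphB -det22 fmorph_eq0 -unitfE -unitmxE.
Qed.

Section Main.
Variables (S : finType) (F : S -> fieldType) (R : realType) (C : fieldType) (vC : C -> R)
  (iota : forall s, {rmorphism F s -> C}).

Lemma pigeon n (f : nat -> 'I_n) : exists i, forall N, exists j, (N <= j)%N /\ f j = i.
Proof.
apply: contrapT => hn.
have hN : forall i, exists N, forall j, (N <= j)%N -> f j <> i.
  move=> i; apply: contrapT => hi; apply: hn; exists i => N.
  apply: contrapT => hj; apply: hi; exists N => j Nj fj; apply: hj; by exists j.
pose N i := projT1 (cid (hN i)).
pose M := \max_(i < n) N i.
apply: (projT2 (cid (hN (f M))) M) => //.
exact: (leq_bigmax (F := N) (f M)).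
Qed.

Lemma sub_limit (H G : GL2S F -> Prop) :
  (forall g, G g -> forall s, g s \in unitmx) ->
  (forall g, G g -> G (invS g)) ->
  (forall g h, H g -> H h -> H (mulS g h)) ->
  (forall g, H g -> H (invS g)) ->
  (forall g, H g -> forall s, g s \in unitmx) ->
  finite_index H G -> forall x, limit_set vC iota G x -> limit_set vC iota H x.
Proof.
move=> GU Ginv Hmul Hinv HU [n [r hr]] x [y [gam [Gg dist cv]]].
have hf : forall j, exists i, H (mulS (invS (r i)) (invS (gam j))).
  by move=> j; apply: hr; apply: Ginv.
pose f j := projT1 (cid (hf j)).
have Hf : forall j, H (mulS (invS (r (f j))) (invS (gam j))) := fun j => projT2 (cid (hf j)).
have [i hi] := pigeon _ f.
pose phi N := projT1 (cid (hi N)).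
have phiP : forall N, (N <= phi N)%N /\ f (phi N) = i := fun N => projT2 (cid (hi N)).
pose js := fix js k := match k with 0 => phi 0%N | k'.+1 => phi (js k').+1 end.
have jsi : forall k, f (js k) = i by case=> [|k] /=; apply phiP.
have jsS : forall k, (js k < js k.+1)%N by move=> k /=; apply (phiP _).1.
have jsmono : forall k l, (k < l)%N -> (js k < js l)%N.
  move=> k; elim=> // l IH; rewrite ltnS leq_eqVlt => /orP [/eqP <-|kl] //.
  exact: ltn_trans (IH kl) (jsS l).
have jsge : forall k, (k <= js k)%N.
  elim=> // k IH; exact: leq_ltn_trans IH (jsS k).
pose a j := mulS (invS (r i)) (invS (gam j)).
have Ha : forall k, H (a (js k)) by move=> k; rewrite /a -(jsi k); apply: Hf.
pose j0 := js 0%N.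
pose h k := mulS (invS (a (js k))) (a j0).
have key : forall k s, h k s *m gam j0 s = gam (js k) s.
  move=> k s; rewrite /h /mulS /invS /a /mulS /invS.
  have uX := HU _ (Ha k) s; rewrite /a /mulS /invS in uX.
  rewrite -!mulmxA (mulVmx (GU _ (Gg _) s)) mulmx1.
  rewrite -{2}[gam (js k) s](mulKmx uX) -!mulmxA (mulVmx (GU _ (Gg _) s)) mulmx1.
  done.
exists (actS iota (gam j0) y), h; split.
- move=> k; exact: Hmul (Hinv _ (Ha k)) (Ha 0%N).
- move=> k l kl hp; apply: (dist (js k) (js l)).
  + move=> e; apply: kl; case: (ltngtP k l) => // [/jsmono|/jsmono]; rewrite e ltnn //.
  + move=> s; have [c [c0 hc]] := hp s; exists c; split => //.
    by rewrite -(key k s) -(key l s) hc scalemxAl.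
- move=> s e e0; have [N hN] := cv s e e0; exists N => m Nm.
  rewrite /actS -mob_mx ?(GU _ (Gg _)) // key.
  exact: hN (leq_trans Nm (jsge m)).
Qed.

End Main.

Theorem lemma2p4 (R : realType) (p : nat) (C : closedFieldType) (vC : C -> R)
  (hC : completed_alg_closure p vC)
  (S : finType) (hS : (0 < #|S|)%N)
  (F : S -> fieldType) (vF : forall s, F s -> R)
  (hF : forall s, na_local_field p (vF s))
  (hchar : forall s (q : nat), (q \in [pchar F s]) = (q \in [pchar C]))
  (iota : forall s, {rmorphism F s -> C})
  (hiota : forall s, cont_emb (vF s) vC (iota s))
  (G G' : GL2S F -> Prop)
  (hG : PGL2S_subgroup G) (hG' : PGL2S_subgroup G')
  (hcomm : commensurable G G') :
  limit_set vC iota G' = limit_set vC iota G.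
Proof.
case: hG => GU _ Gmul Ginv; case: hG' => G'U _ G'mul G'inv.
case: hcomm => fiG fiG'.
pose H := fun g => G g /\ G' g.
have Hmul : forall g h, H g -> H h -> H (mulS g h).
  by move=> g h [? ?] [? ?]; split; [apply: Gmul|apply: G'mul].
have Hinv : forall g, H g -> H (invS g).
  by move=> g [? ?]; split; [apply: Ginv|apply: G'inv].
have HU : forall g, H g -> forall s, g s \in unitmx by move=> g [? _]; apply: GU.
have mono : forall (A B : GL2S F -> Prop), (forall g, A g -> B g) ->
    forall x, limit_set vC iota A x -> limit_set vC iota B x.
  move=> A B AB x [y [gam [Ag d cv]]]; exists y, gam; split => // j; exact: AB.
apply: functional_extensionality_dep => x; apply: propositional_extensionality; split => hx.
- apply: (mono H) => [g []//|]; exact: sub_limit G'U G'inv Hmul Hinv HU fiG' x hx.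
- apply: (mono H) => [g []//|]; exact: sub_limit GU Ginv Hmul Hinv HU fiG x hx.
Qed.
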